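(* Let $B(\mathbf f,\tilde{\mathbf f})=P(\mathbf f\cdot\nabla\tilde{\mathbf f}+\tilde{\mathbf f}\cdot\nabla\mathbf f)$ for smooth divergence-free mean-free fields on $\mathbf T^3$. Then: (i) for every $\mathbf k\in\mathbf Z^3\setminus\{0\}$, $B(\mathbf e,\tilde{\mathbf e})=0$ for all $\mathbf e,\tilde{\mathbf e}\in F_{\mathbf k}$; (ii) for all $\mathbf j,\mathbf k\in\mathbf Z^3\setminus\{0\}$, $\operatorname{span}\{B(\mathbf e,\tilde{\mathbf e}):\mathbf e\in F_{\mathbf j},\tilde{\mathbf e}\in F_{\mathbf k}\}\subseteq\operatorname{span}(F_{\mathbf j-\mathbf k}\cup F_{\mathbf j+\mathbf k})$, with equality whenever $\mathbf j,\mathbf k$ are linearly independent and $|\mathbf j|\ne|\mathbf k|$; (iii) $F_{(1,1,1)}\subseteq\operatorname{span}\{B(B(\mathbf e,\tilde{\mathbf e}),\tilde{\tilde{\mathbf e}}):\mathbf e,\tilde{\mathbf e},\tilde{\tilde{\mathbf e}}\in F_{(1,0,0)}\cup F_{(0,1,0)}\cup F_{(0,0,1)}\}$.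
   Context: $P$ is the Leray projection onto mean-free divergence-free vector fields on $\mathbf T^3$. For each $\mathbf k\in\mathbf Z^3\setminus\{0\}$ choose $\mathbf a^{(0)}_{\mathbf k},\mathbf a^{(1)}_{\mathbf k}\in\mathbb R^3$ with $\mathbf a^{(0)}_{\mathbf k}\cdot\mathbf k=\mathbf a^{(1)}_{\mathbf k}\cdot\mathbf k=\mathbf a^{(0)}_{\mathbf k}\cdot\mathbf a^{(1)}_{\mathbf k}=0$ and $|\mathbf a^{(0)}_{\mathbf k}|^2=|\mathbf a^{(1)}_{\mathbf k}|^2=1/(4\pi)$; set $\mathbf e_{\mathbf k,l,0}=2\mathbf a^{(l)}_{\mathbf k}\cos(\mathbf k\cdot x)$, $\mathbf e_{\mathbf k,l,1}=2\mathbf a^{(l)}_{\mathbf k}\sin(\mathbf k\cdot x)$ and $F_{\mathbf k}=\operatorname{span}\{\mathbf e_{\mathbf k,l,m}:l,m\in\{0,1\}\}$ (so $F_{\mathbf k}$ is the space of divergence-free fields $\mathbf A\cos(\mathbf k\cdot x)+\mathbf B\sin(\mathbf k\cdot x)$ with $\mathbf A,\mathbf B\perp\mathbf k$, and $F_{-\mathbf k}=F_{\mathbf k}$). By convention $F_{\mathbf 0}=\{0\}$. *)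

(* Defs.v *)
From Stdlib Require Import Reals ZArith List ClassicalEpsilon.
Open Scope R_scope.

Record V3 := mkV3 { v1 : R; v2 : R; v3 : R }.

Definition vzero : V3 := mkV3 0 0 0.
Definition vadd (a b : V3) : V3 := mkV3 (v1 a + v1 b) (v2 a + v2 b) (v3 a + v3 b).
Definition vscale (c : R) (a : V3) : V3 := mkV3 (c * v1 a) (c * v2 a) (c * v3 a).
Definition vdot (a b : V3) : R := v1 a * v1 b + v2 a * v2 b + v3 a * v3 b.
Definition vnorm (a : V3) : R := sqrt (vdot a a).
Definition ev1 : V3 := mkV3 1 0 0.
Definition ev2 : V3 := mkV3 0 1 0.
Definition ev3 : V3 := mkV3 0 0 1.

Record Z3 := mkZ3 { z1 : Z; z2 : Z; z3 : Z }.
Definition zzero : Z3 := mkZ3 0 0 0.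
Definition zadd (j k : Z3) : Z3 := mkZ3 (z1 j + z1 k) (z2 j + z2 k) (z3 j + z3 k).
Definition zsub (j k : Z3) : Z3 := mkZ3 (z1 j - z1 k) (z2 j - z2 k) (z3 j - z3 k).
Definition zeqb (j k : Z3) : bool :=
  (Z.eqb (z1 j) (z1 k) && Z.eqb (z2 j) (z2 k) && Z.eqb (z3 j) (z3 k))%bool.
Definition zR (k : Z3) : V3 := mkV3 (IZR (z1 k)) (IZR (z2 k)) (IZR (z3 k)).

(** Vector fields on T^3, viewed as (2pi-periodic) maps R^3 -> R^3 *)
Definition Field := V3 -> V3.
Definition fzero : Field := fun _ => vzero.
Definition fadd (f g : Field) : Field := fun x => vadd (f x) (g x).
Definition fscale (c : R) (f : Field) : Field := fun x => vscale c (f x).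

Definition mode (k : Z3) (A B : V3) : Field :=
  fun x => vadd (vscale (cos (vdot (zR k) x)) A) (vscale (sin (vdot (zR k) x)) B).

Fixpoint eval_rep (l : list (Z3 * V3 * V3)) : Field :=
  match l with
  | nil => fzero
  | (k, A, B) :: l' => fadd (mode k A B) (eval_rep l')
  end.

(** Fourier symbol of the Leray projection: projection onto k^perp for k <> 0,
    and 0 on the mean (k = 0). *)
Definition leray_symbol (k : Z3) (v : V3) : V3 :=
  if zeqb k zzero then vzero
  else vadd v (vscale (- (vdot v (zR k) / vdot (zR k) (zR k))) (zR k)).

Definition proj_rep (l : list (Z3 * V3 * V3)) : list (Z3 * V3 * V3) :=
  map (fun t => match t with (k, A, B) => (k, leray_symbol k A, leray_symbol k B) end) l.

(** Leray projection P (on trigonometric-polynomial fields, which contain every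
    field to which it is applied in the statement): the Fourier multiplier
    above.  Defined by choice; independent of the representation by uniqueness
    of Fourier coefficients. *)
Definition Leray (f : Field) : Field :=
  epsilon (inhabits fzero)
    (fun g => exists l, f = eval_rep l /\ g = eval_rep (proj_rep l)).

Definition deriv1 (h : R -> R) (t : R) : R :=
  epsilon (inhabits 0) (fun l => derivable_pt_lim h t l).

Definition pderiv (g : Field) (d : V3) : Field :=
  fun x => mkV3 (deriv1 (fun t => v1 (g (vadd x (vscale t d)))) 0)
                (deriv1 (fun t => v2 (g (vadd x (vscale t d)))) 0)
                (deriv1 (fun t => v3 (g (vadd x (vscale t d)))) 0).

Definition advect (f g : Field) : Field :=
  fun x => vadd (vscale (v1 (f x)) (pderiv g ev1 x))
             (vadd (vscale (v2 (f x)) (pderiv g ev2 x))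
                   (vscale (v3 (f x)) (pderiv g ev3 x))).

Definition Bop (f g : Field) : Field := Leray (fadd (advect f g) (advect g f)).

(** F_k = { A cos(k.x) + B sin(k.x) : A, B perpendicular to k },  F_0 = {0}.
    (= span of the e_{k,l,m} of the paper, for any admissible choice of a_k^(l).) *)
Definition Fk (k : Z3) (f : Field) : Prop :=
  if zeqb k zzero then f = fzero
  else exists A B : V3, vdot A (zR k) = 0 /\ vdot B (zR k) = 0 /\ f = mode k A B.

Inductive span (S : Field -> Prop) : Field -> Prop :=
| span_zero : span S fzero
| span_cons : forall (c : R) (g h : Field), S g -> span S h -> span S (fadd (fscale c g) h).

Definition subset (S T : Field -> Prop) : Prop := forall f, S f -> T f.
Definition set_union (S T : Field -> Prop) : Field -> Prop := fun f => S f \/ T f.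

Definition Bset (j k : Z3) : Field -> Prop :=
  fun f => exists e e', Fk j e /\ Fk k e' /\ f = Bop e e'.

Definition lin_indep2 (j k : Z3) : Prop :=
  forall a b : R, vadd (vscale a (zR j)) (vscale b (zR k)) = vzero -> a = 0 /\ b = 0.

Definition Fcoord (f : Field) : Prop :=
  Fk (mkZ3 1 0 0) f \/ Fk (mkZ3 0 1 0) f \/ Fk (mkZ3 0 0 1) f.

Definition BBset : Field -> Prop :=
  fun f => exists e e' e'', Fcoord e /\ Fcoord e' /\ Fcoord e'' /\ f = Bop (Bop e e') e''.

(* Main.v *)
Require Import Defs.
From Stdlib Require Import Reals ZArith List ClassicalEpsilon Lra Lia FunctionalExtensionality.
Open Scope R_scope.

Definition rep := list (Z3 * V3 * V3).

Lemma V3_eq a b : v1 a = v1 b -> v2 a = v2 b -> v3 a = v3 b -> a = b.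
Proof. destruct a, b; simpl; intros; subst; reflexivity. Qed.

Ltac vring := apply V3_eq; simpl; ring.

Lemma eval_rep_cons k A B l x :
  eval_rep ((k,A,B)::l) x = vadd (mode k A B x) (eval_rep l x).
Proof. reflexivity. Qed.

Lemma eval_rep_nil x : eval_rep nil x = vzero.
Proof. reflexivity. Qed.

Lemma eval_rep_app l1 l2 x :
  eval_rep (l1 ++ l2) x = vadd (eval_rep l1 x) (eval_rep l2 x).
Proof.
  induction l1 as [|[[k A] B] l1 IH]; simpl.
  - unfold fzero. vring.
  - unfold fadd. rewrite IH. vring.
Qed.

Definition plin (p : V3 -> R) :=
  (forall a b, p (vadd a b) = p a + p b) /\ (forall c a, p (vscale c a) = c * p a)
  /\ p vzero = 0.

Lemma plin1 : plin v1. Proof. repeat split; intros; reflexivity. Qed.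
Lemma plin2 : plin v2. Proof. repeat split; intros; reflexivity. Qed.
Lemma plin3 : plin v3. Proof. repeat split; intros; reflexivity. Qed.

Definition drep (d : V3) (l : rep) : rep :=
  map (fun t => match t with (k, A, B) =>
     (k, vscale (vdot (zR k) d) B, vscale (- vdot (zR k) d) A) end) l.

Lemma dtrig a b cA cB :
  derivable_pt_lim (fun t => cos (a + t*b) * cA + sin (a + t*b) * cB) 0
    ((- sin a * b) * cA + (cos a * b) * cB).
Proof.
  assert (H1 : derivable_pt_lim (fun t => a + t*b) 0 b).
  { replace (fun t => a + t*b) with (plus_fct (fct_cte a) (mult_real_fct b id)).
    2:{ apply functional_extensionality; intro; unfold plus_fct, fct_cte, mult_real_fct, id; ring. }
    replace b with (0 + b*1) at 2 by ring.
    apply derivable_pt_lim_plus. apply derivable_pt_lim_const.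
    apply derivable_pt_lim_scal. apply derivable_pt_lim_id. }
  assert (Hc : derivable_pt_lim (comp cos (fun t => a + t*b)) 0 (- sin a * b)).
  { apply derivable_pt_lim_comp; auto. replace (a + 0*b) with a by ring. apply derivable_pt_lim_cos. }
  assert (Hs : derivable_pt_lim (comp sin (fun t => a + t*b)) 0 (cos a * b)).
  { apply derivable_pt_lim_comp; auto. replace (a + 0*b) with a by ring. apply derivable_pt_lim_sin. }
  apply (derivable_pt_lim_plus (fun t => cos (a + t*b) * cA) (fun t => sin (a + t*b) * cB)).
  - replace (fun t => cos (a + t*b) * cA) with (mult_real_fct cA (comp cos (fun t => a + t*b))).
    2:{ apply functional_extensionality; intro; unfold mult_real_fct, comp; ring. }
    replace (- sin a * b * cA) with (cA * (- sin a * b)) by ring. apply derivable_pt_lim_scal; auto.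
  - replace (fun t => sin (a + t*b) * cB) with (mult_real_fct cB (comp sin (fun t => a + t*b))).
    2:{ apply functional_extensionality; intro; unfold mult_real_fct, comp; ring. }
    replace (cos a * b * cB) with (cB * (cos a * b)) by ring. apply derivable_pt_lim_scal; auto.
Qed.

Lemma vdot_shift k x t d : vdot k (vadd x (vscale t d)) = vdot k x + t * vdot k d.
Proof. unfold vdot, vadd, vscale; simpl; ring. Qed.

Lemma deriv_rep_p p (Hp : plin p) d l x :
  derivable_pt_lim (fun t => p (eval_rep l (vadd x (vscale t d)))) 0
     (p (eval_rep (drep d l) x)).
Proof.
  destruct Hp as [Hadd [Hsc H0]].
  induction l as [|[[k A] B] l IH]; simpl.
  - unfold fzero. rewrite H0.
    replace (fun _ : R => p vzero) with (fun _ : R => 0).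
    2:{ apply functional_extensionality; intro; auto. }
    apply derivable_pt_lim_const.
  - unfold fadd. 
    replace (fun t => p (vadd (mode k A B (vadd x (vscale t d))) (eval_rep l (vadd x (vscale t d)))))
      with (fun t => (cos (vdot (zR k) x + t * vdot (zR k) d) * p A + sin (vdot (zR k) x + t * vdot (zR k) d) * p B)
                  + p (eval_rep l (vadd x (vscale t d)))).
    2:{ apply functional_extensionality; intro t. unfold mode. rewrite !Hadd, !Hsc, vdot_shift. reflexivity. }
    rewrite Hadd. unfold mode. rewrite !Hadd, !Hsc.
    apply (derivable_pt_lim_plus (fun t => cos (vdot (zR k) x + t * vdot (zR k) d) * p A + sin (vdot (zR k) x + t * vdot (zR k) d) * p B)).
    + replace (cos (vdot (zR k) x) * (vdot (zR k) d * p B) + sin (vdot (zR k) x) * (- vdot (zR k) d * p A))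
        with ((- sin (vdot (zR k) x) * vdot (zR k) d) * p A + (cos (vdot (zR k) x) * vdot (zR k) d) * p B) by ring.
      apply dtrig.
    + exact IH.
Qed.

Lemma deriv1_eq h t l : derivable_pt_lim h t l -> deriv1 h t = l.
Proof.
  intro H. unfold deriv1.
  pose proof (epsilon_spec (inhabits 0) (fun l => derivable_pt_lim h t l) (ex_intro _ l H)) as HH.
  eapply uniqueness_limite; eauto.
Qed.

Lemma pderiv_rep l d : pderiv (eval_rep l) d = eval_rep (drep d l).
Proof.
  apply functional_extensionality; intro x. unfold pderiv.
  apply V3_eq; simpl; apply deriv1_eq.
  - apply (deriv_rep_p v1 plin1).
  - apply (deriv_rep_p v2 plin2).
  - apply (deriv_rep_p v3 plin3).
Qed.

Definition mul2 (a b : R) (k : Z3) (C D : V3) (m : Z3) : rep :=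
  (zadd k m, vadd (vscale (a/2) C) (vscale (-(b/2)) D), vadd (vscale (a/2) D) (vscale (b/2) C)) ::
  (zsub k m, vadd (vscale (a/2) C) (vscale (b/2) D), vadd (vscale (b/2) C) (vscale (-(a/2)) D)) :: nil.

Definition mulrep (p : V3 -> R) (l1 l3 : rep) : rep :=
  flat_map (fun t1 => match t1 with (k, A, B) =>
    flat_map (fun t3 => match t3 with (m, C, D) => mul2 (p A) (p B) k C D m end) l3 end) l1.

Lemma zR_add k m : zR (zadd k m) = vadd (zR k) (zR m).
Proof. destruct k, m; unfold zR, zadd, vadd; simpl; rewrite !plus_IZR; reflexivity. Qed.
Lemma zR_sub k m : zR (zsub k m) = vadd (zR k) (vscale (-1) (zR m)).
Proof. destruct k, m; unfold zR, zsub, vadd, vscale; simpl; rewrite !minus_IZR; f_equal; ring. Qed.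

Lemma vdot_addl a b x : vdot (vadd a b) x = vdot a x + vdot b x.
Proof. unfold vdot, vadd; simpl; ring. Qed.
Lemma vdot_scalel c a x : vdot (vscale c a) x = c * vdot a x.
Proof. unfold vdot, vscale; simpl; ring. Qed.

Lemma mul2_spec a b k C D m x :
  eval_rep (mul2 a b k C D m) x =
  vscale (a * cos (vdot (zR k) x) + b * sin (vdot (zR k) x)) (mode m C D x).
Proof.
  unfold mul2. rewrite !eval_rep_cons, eval_rep_nil. unfold mode.
  rewrite zR_add, zR_sub, !vdot_addl, !vdot_scalel.
  replace (vdot (zR k) x + -1 * vdot (zR m) x) with (vdot (zR k) x - vdot (zR m) x) by ring.
  rewrite cos_plus, sin_plus, cos_minus, sin_minus.
  apply V3_eq; simpl; field.
Qed.

Lemma eval_rep_flat_map {T} (f : T -> rep) (l : list T) x :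
  eval_rep (flat_map f l) x = fold_right (fun t acc => vadd (eval_rep (f t) x) acc) vzero l.
Proof.
  induction l; simpl. reflexivity. rewrite eval_rep_app, IHl. reflexivity.
Qed.

Lemma mulrep_spec p (Hp : plin p) l1 l3 x :
  eval_rep (mulrep p l1 l3) x = vscale (p (eval_rep l1 x)) (eval_rep l3 x).
Proof.
  destruct Hp as [Hadd [Hsc H0]].
  unfold mulrep. rewrite eval_rep_flat_map.
  induction l1 as [|[[k A] B] l1 IH]; simpl.
  - unfold fzero. rewrite H0. vring.
  - rewrite IH. unfold fadd. rewrite eval_rep_flat_map.
    assert (E : fold_right (fun t acc => vadd (eval_rep (let '(m, C, D) := t in mul2 (p A) (p B) k C D m) x) acc) vzero l3
       = vscale (p A * cos (vdot (zR k) x) + p B * sin (vdot (zR k) x)) (eval_rep l3 x)).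
    { clear IH. induction l3 as [|[[m C] D] l3 IH3]; cbn [fold_right].
      - rewrite eval_rep_nil. vring.
      - rewrite IH3, mul2_spec, eval_rep_cons. vring. }
    rewrite E. unfold mode. rewrite !Hadd, !Hsc. vring.
Qed.

Definition advrep (l1 l2 : rep) : rep :=
  mulrep v1 l1 (drep ev1 l2) ++ mulrep v2 l1 (drep ev2 l2) ++ mulrep v3 l1 (drep ev3 l2).

Lemma advect_rep l1 l2 : advect (eval_rep l1) (eval_rep l2) = eval_rep (advrep l1 l2).
Proof.
  apply functional_extensionality; intro x. unfold advect, advrep.
  rewrite !pderiv_rep, !eval_rep_app, !mulrep_spec by (apply plin1 || apply plin2 || apply plin3).
  reflexivity.
Qed.

Lemma advsum_rep l1 l2 :
  fadd (advect (eval_rep l1) (eval_rep l2)) (advect (eval_rep l2) (eval_rep l1))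
  = eval_rep (advrep l1 l2 ++ advrep l2 l1).
Proof.
  rewrite !advect_rep. apply functional_extensionality; intro x. unfold fadd. rewrite eval_rep_app. reflexivity.
Qed.

Definition key (t : Z3 * V3 * V3) : Z3 := match t with (k, _, _) => k end.
Definition zneg (k : Z3) : Z3 := mkZ3 (- z1 k) (- z2 k) (- z3 k).
Definition classeq (j k : Z3) : bool := (zeqb j k || zeqb j (zneg k))%bool.
Definition inclass (k : Z3) (t : Z3 * V3 * V3) : bool := classeq (key t) k.

Lemma zeqb_spec j k : zeqb j k = true <-> j = k.
Proof.
  destruct j as [a b c], k as [d e f]; unfold zeqb; simpl.
  rewrite !Bool.andb_true_iff, !Z.eqb_eq. split.
  - intros [[-> ->] ->]; reflexivity.
  - intro H; inversion H; auto.
Qed.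

Lemma zneg_inv k : zneg (zneg k) = k.
Proof. destruct k; unfold zneg; simpl; f_equal; lia. Qed.

Lemma classeq_spec j k : classeq j k = true <-> (j = k \/ j = zneg k).
Proof. unfold classeq. rewrite Bool.orb_true_iff, !zeqb_spec. tauto. Qed.

Lemma classeq_sym j k : classeq j k = classeq k j.
Proof.
  apply Bool.eq_true_iff_eq. rewrite !classeq_spec. split; intros [-> | ->]; auto;
  right; rewrite zneg_inv; auto.
Qed.

Lemma classeq_trans a b c : classeq a b = true -> classeq b c = true -> classeq a c = true.
Proof.
  rewrite !classeq_spec. intros [-> | ->] [-> | ->]; auto. rewrite zneg_inv; auto.
Qed.

Lemma classeq_refl k : classeq k k = true.
Proof. apply classeq_spec; auto. Qed.

Lemma eval_rep_filter (P : Z3*V3*V3 -> bool) l x :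
  eval_rep l x = vadd (eval_rep (filter P l) x) (eval_rep (filter (fun t => negb (P t)) l) x).
Proof.
  induction l as [|[[k A] B] l IH]; simpl.
  - unfold fzero. vring.
  - destruct (P (k,A,B)); simpl; unfold fadd; rewrite IH; vring.
Qed.

Lemma filter_sub {T} (P Q : T -> bool) l :
  (forall t, P t = true -> Q t = true) -> filter P (filter Q l) = filter P l.
Proof.
  intro H. induction l as [|t l IH]; simpl; auto.
  destruct (Q t) eqn:Eq; simpl.
  - destruct (P t); rewrite IH; auto.
  - destruct (P t) eqn:Ep; auto. rewrite (H t Ep) in Eq. discriminate.
Qed.

Lemma filter_none {T} (P : T -> bool) l : (forall t, In t l -> P t = false) -> filter P l = nil.
Proof.
  intro H. induction l as [|t l IH]; simpl; auto.
  rewrite H by (left; auto). apply IH. intros; apply H; right; auto.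
Qed.

Lemma Q_zero_aux n : forall l : rep, (length l < n)%nat ->
  (forall c, eval_rep (filter (inclass c) l) = fzero) -> eval_rep l = fzero.
Proof.
  induction n as [|n IHn]; intros l Hl H. lia.
  destruct l as [|t0 r]. reflexivity.
  set (k0 := key t0).
  apply functional_extensionality; intro x.
  rewrite (eval_rep_filter (inclass k0)).
  rewrite (H k0).
  assert (E : eval_rep (filter (fun t => negb (inclass k0 t)) (t0 :: r)) = fzero).
  { apply IHn.
    - simpl. unfold inclass at 1. fold k0. rewrite classeq_refl. simpl.
      pose proof (filter_length_le (fun t => negb (inclass k0 t)) r). simpl in Hl. lia.
    - intro c. destruct (classeq c k0) eqn:Hc.
      + rewrite filter_none. reflexivity.
        intros t Ht. apply filter_In in Ht. destruct Ht as [_ Ht].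
        unfold inclass in *. destruct (classeq (key t) c) eqn:E; auto.
        rewrite (classeq_trans _ _ _ E Hc) in Ht. discriminate.
      + rewrite filter_sub. apply H.
        intros t Ht. unfold inclass in *. destruct (classeq (key t) k0) eqn:E; auto.
        rewrite classeq_sym in Ht. rewrite (classeq_trans _ _ _ Ht E) in Hc. discriminate. }
  rewrite E. unfold fzero. vring.
Qed.

Lemma Q_zero l : (forall c, eval_rep (filter (inclass c) l) = fzero) -> eval_rep l = fzero.
Proof. apply (Q_zero_aux (S (length l))). lia. Qed.

Definition lam (s : R) (v : V3) (k0 k : Z3) : R :=
  2 * cos (s * vdot (zR k) v) - 2 * cos (s * vdot (zR k0) v).

Definition scale_rep s v k0 (l : rep) : rep :=
  map (fun t => match t with (k, A, B) => (k, vscale (lam s v k0 k) A, vscale (lam s v k0 k) B) end) l.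

Definition Tsh (s : R) (v : V3) (k0 : Z3) (g : Field) : Field := fun x =>
  vadd (vadd (g (vadd x (vscale s v))) (g (vadd x (vscale (-s) v))))
       (vscale (-(2 * cos (s * vdot (zR k0) v))) (g x)).

Lemma Tsh_rep s v k0 l x : Tsh s v k0 (eval_rep l) x = eval_rep (scale_rep s v k0 l) x.
Proof.
  induction l as [|[[k A] B] l IH].
  - unfold Tsh, scale_rep. simpl. unfold fzero. vring.
  - unfold scale_rep in *. cbn [map]. rewrite eval_rep_cons, <- IH.
    unfold Tsh. rewrite !eval_rep_cons. unfold mode, lam.
    rewrite !vdot_shift.
    rewrite cos_plus, sin_plus. 
    replace (vdot (zR k) x + - s * vdot (zR k) v) with (vdot (zR k) x - s * vdot (zR k) v) by ring.
    rewrite cos_minus, sin_minus.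
    apply V3_eq; simpl; ring.
Qed.

Lemma zR_neg k : zR (zneg k) = vscale (-1) (zR k).
Proof. destruct k; unfold zR, zneg, vscale; simpl; rewrite !opp_IZR; f_equal; ring. Qed.

Lemma lam_class s v k0 k : classeq k k0 = true -> lam s v k0 k = 0.
Proof.
  intro H. apply classeq_spec in H. unfold lam. destruct H as [-> | ->]. ring.
  rewrite zR_neg, vdot_scalel. replace (s * (-1 * vdot (zR k0) v)) with (- (s * vdot (zR k0) v)) by ring.
  rewrite cos_neg. ring.
Qed.

Lemma lam_classeq s v k0 k c : classeq k c = true -> lam s v k0 k = lam s v k0 c.
Proof.
  intro H. apply classeq_spec in H. destruct H as [-> | ->]. auto.
  unfold lam. rewrite zR_neg, vdot_scalel. replace (s * (-1 * vdot (zR c) v)) with (- (s * vdot (zR c) v)) by ring.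
  rewrite cos_neg. ring.
Qed.

Lemma eval_scale_const s v k0 l mu x :
  (forall t, In t l -> lam s v k0 (key t) = mu) ->
  eval_rep (scale_rep s v k0 l) x = vscale mu (eval_rep l x).
Proof.
  induction l as [|[[k A] B] l IH]; intro H.
  - unfold scale_rep; simpl. unfold fzero. vring.
  - unfold scale_rep in *; cbn [map]. rewrite !eval_rep_cons. rewrite IH by (intros; apply H; right; auto).
    pose proof (H (k,A,B) (or_introl eq_refl)) as Hk. simpl in Hk. rewrite Hk. unfold mode. vring.
Qed.

Lemma filter_scale P s v k0 l :
  (forall k A B A' B', P (k,A,B) = P (k,A',B')) ->
  filter P (scale_rep s v k0 l) = scale_rep s v k0 (filter P l).
Proof.
  intro HP. induction l as [|[[k A] B] l IH]; simpl; auto.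
  rewrite (HP k (vscale (lam s v k0 k) A) (vscale (lam s v k0 k) B) A B).
  destruct (P (k,A,B)); simpl; rewrite IH; auto.
Qed.

Definition zb (k : Z3) : Z := Z.max (Z.abs (z1 k)) (Z.max (Z.abs (z2 k)) (Z.abs (z3 k))).
Definition bnd (l : list Z3) : Z := fold_right (fun k acc => Z.max (zb k) acc) 0%Z l.

Lemma bnd_ge0 l : (0 <= bnd l)%Z.
Proof. induction l; simpl. lia. lia. Qed.

Lemma bnd_in k l : In k l -> (Z.abs (z1 k) <= bnd l /\ Z.abs (z2 k) <= bnd l /\ Z.abs (z3 k) <= bnd l)%Z.
Proof.
  induction l as [|a l IH]; simpl; intros H. contradiction.
  destruct H as [->|H]. unfold zb. lia. specialize (IH H). lia.
Qed.

Lemma int_sep M d1 d2 d3 : (0 <= M -> Z.abs d1 <= 2*M -> Z.abs d2 <= 2*M -> Z.abs d3 <= 2*M ->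
  d1 + d2 * (4*M+1) + d3 * ((4*M+1)*(4*M+1)) = 0 -> d1 = 0 /\ d2 = 0 /\ d3 = 0)%Z.
Proof. intros HM H1 H2 H3 E. set (N := (4*M+1)%Z) in *.
  assert (HN : (2*M*(1+N) < N*N)%Z) by (unfold N; nia).
  assert (d3 = 0%Z).
  { destruct (Z.lt_trichotomy d3 0) as [h|[h|h]]; auto.
    - assert (d3 * (N*N) <= - (N*N))%Z by nia. apply Z.abs_le in H1. apply Z.abs_le in H2. nia.
    - assert (d3 * (N*N) >= (N*N))%Z by nia. apply Z.abs_le in H1. apply Z.abs_le in H2. nia. }
  subst d3.
  assert (d2 = 0%Z).
  { destruct (Z.lt_trichotomy d2 0) as [h|[h|h]]; auto; apply Z.abs_le in H1; nia. }
  subst. lia.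
Qed.

Definition ik (N : Z) (k : Z3) : Z := (z1 k + z2 k * N + z3 k * (N * N))%Z.

Lemma ik_vdot N k : vdot (zR k) (mkV3 1 (IZR N) (IZR (N*N))) = IZR (ik N k).
Proof. unfold vdot, zR, ik; simpl. rewrite !plus_IZR, !mult_IZR. ring. Qed.

Lemma ik_abs_neq M j k : (0 <= M)%Z ->
  (Z.abs (z1 j) <= M /\ Z.abs (z2 j) <= M /\ Z.abs (z3 j) <= M)%Z ->
  (Z.abs (z1 k) <= M /\ Z.abs (z2 k) <= M /\ Z.abs (z3 k) <= M)%Z ->
  classeq j k = false -> Z.abs (ik (4*M+1) j) <> Z.abs (ik (4*M+1) k).
Proof.
  intros HM Hj Hk Hc E.
  assert (Hne : j <> k /\ j <> zneg k).
  { split; intro; subst; [rewrite classeq_refl in Hc|]; try discriminate.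
    assert (classeq (zneg k) k = true) by (apply classeq_spec; auto). congruence. }
  destruct Hne as [Hn1 Hn2].
  destruct j as [a b c], k as [d e f]; cbn [z1 z2 z3] in *. unfold ik in E; cbn [z1 z2 z3] in E.
  destruct (Z.abs_eq_or_opp (a + b * (4 * M + 1) + c * ((4 * M + 1) * (4 * M + 1)))) as [E1|E1];
  destruct (Z.abs_eq_or_opp (d + e * (4 * M + 1) + f * ((4 * M + 1) * (4 * M + 1)))) as [E2|E2].
  - destruct (int_sep M (a-d) (b-e) (c-f)) as [? [? ?]]; try lia. apply Hn1; f_equal; lia.
  - destruct (int_sep M (a+d) (b+e) (c+f)) as [? [? ?]]; try lia. apply Hn2; unfold zneg; cbn [z1 z2 z3]; f_equal; lia.
  - destruct (int_sep M (a+d) (b+e) (c+f)) as [? [? ?]]; try lia. apply Hn2; unfold zneg; cbn [z1 z2 z3]; f_equal; lia.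
  - destruct (int_sep M (a-d) (b-e) (c-f)) as [? [? ?]]; try lia. apply Hn1; f_equal; lia.
Qed.

Lemma cos_absZ s z : cos (s * IZR z) = cos (s * IZR (Z.abs z)).
Proof.
  destruct (Z.abs_eq_or_opp z) as [E|E]; rewrite E; auto.
  rewrite opp_IZR. replace (s * - IZR z) with (- (s * IZR z)) by ring. rewrite cos_neg; auto.
Qed.

Lemma ik_bound M k : (0 <= M)%Z ->
  (Z.abs (z1 k) <= M /\ Z.abs (z2 k) <= M /\ Z.abs (z3 k) <= M)%Z ->
  (Z.abs (ik (4*M+1) k) <= M * (1 + (4*M+1) + (4*M+1)*(4*M+1)))%Z.
Proof.
  intros HM [H1 [H2 H3]]. unfold ik. set (N := (4*M+1)%Z).
  assert (0 <= N)%Z by (unfold N; lia).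
  apply Z.abs_le in H1; apply Z.abs_le in H2; apply Z.abs_le in H3.
  apply Z.abs_le. split; nia.
Qed.

Lemma exists_vs k0 (l : rep) : exists s v, forall t, In t l -> classeq (key t) k0 = false ->
  lam s v k0 (key t) <> 0.
Proof.
  set (M := bnd (k0 :: map key l)).
  assert (HM : (0 <= M)%Z) by apply bnd_ge0.
  set (N := (4*M+1)%Z).
  set (W := (M * (1 + N + N*N))%Z).
  assert (HW : (0 <= W)%Z) by (unfold W, N; nia).
  exists (PI / IZR (W + 1)), (mkV3 1 (IZR N) (IZR (N*N))).
  intros t Ht Hc. unfold lam. rewrite !ik_vdot.
  assert (Bk0 := bnd_in k0 (k0 :: map key l) (or_introl eq_refl)).
  assert (Bt := bnd_in (key t) (k0 :: map key l) (or_intror (in_map key l t Ht))).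
  fold M in Bk0, Bt.
  assert (Hne := ik_abs_neq M (key t) k0 HM Bt Bk0 Hc). fold N in Hne.
  assert (Ib1 := ik_bound M (key t) HM Bt). assert (Ib2 := ik_bound M k0 HM Bk0). fold N W in Ib1, Ib2.
  rewrite (cos_absZ _ (ik N (key t))), (cos_absZ _ (ik N k0)).
  set (a := Z.abs (ik N (key t))) in *. set (b := Z.abs (ik N k0)) in *.
  assert (Ha : (0 <= a)%Z) by apply Z.abs_nonneg. assert (Hb : (0 <= b)%Z) by apply Z.abs_nonneg.
  assert (HW1 : 0 < IZR (W + 1)) by (apply IZR_lt; lia).
  assert (HPI := PI_RGT_0).
  assert (Hs : 0 < PI / IZR (W+1)) by (apply Rdiv_lt_0_compat; lra).
  assert (Hle : forall z, (0 <= z <= W)%Z -> 0 <= PI / IZR (W+1) * IZR z <= PI).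
  { intros z Hz. split. apply Rmult_le_pos; [lra| apply IZR_le; lia].
    assert (IZR z <= IZR (W+1)) by (apply IZR_le; lia).
    replace (PI / IZR (W + 1) * IZR z) with (PI * (IZR z / IZR (W+1))) by (field; lra).
    rewrite <- (Rmult_1_r PI) at 2. apply Rmult_le_compat_l. lra.
    apply (Rmult_le_reg_r (IZR (W+1))); auto. unfold Rdiv. rewrite Rmult_assoc, Rinv_l by lra. lra. }
  assert (Hab : (a < b \/ b < a)%Z) by lia.
  destruct Hab as [Hab|Hab].
  - assert (cos (PI / IZR (W+1) * IZR b) < cos (PI / IZR (W+1) * IZR a)).
    { apply cos_decreasing_1; try apply Hle; try lia. apply Rmult_lt_compat_l; auto. apply IZR_lt; auto. }
    lra.
  - assert (cos (PI / IZR (W+1) * IZR a) < cos (PI / IZR (W+1) * IZR b)).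
    { apply cos_decreasing_1; try apply Hle; try lia. apply Rmult_lt_compat_l; auto. apply IZR_lt; auto. }
    lra.
Qed.

Lemma vscale_zero mu w : mu <> 0 -> vscale mu w = vzero -> w = vzero.
Proof.
  intros H E. destruct w as [a b c]. unfold vscale in E; simpl in E. inversion E.
  apply V3_eq; simpl.
  - apply (Rmult_eq_reg_l mu); auto; lra.
  - apply (Rmult_eq_reg_l mu); auto; lra.
  - apply (Rmult_eq_reg_l mu); auto; lra.
Qed.

Lemma inclass_key c k A B A' B' : inclass c (k,A,B) = inclass c (k,A',B').
Proof. reflexivity. Qed.

Lemma uniq_aux n : forall l : rep, (length l < n)%nat -> eval_rep l = fzero ->
  forall c, eval_rep (filter (inclass c) l) = fzero.
Proof.
  induction n as [|n IHn]; intros l Hl Hz. lia.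
  destruct l as [|t0 r] eqn:El. intros; reflexivity.
  rewrite <- El in *.
  set (k0 := key t0).
  destruct (exists_vs k0 l) as [s [v Hsv]].
  set (Pn := fun t => negb (inclass k0 t)).
  set (l2 := filter Pn l).
  set (l' := scale_rep s v k0 l2).
  assert (Hl2 : (length l2 < length l)%nat).
  { unfold l2, Pn. rewrite El. simpl. unfold inclass at 1. fold k0. rewrite classeq_refl. simpl.
    pose proof (filter_length_le (fun t => negb (inclass k0 t)) r). lia. }
  assert (H1 : eval_rep l' = fzero).
  { apply functional_extensionality; intro x.
    assert (E := Tsh_rep s v k0 l x).
    assert (E0 : Tsh s v k0 (eval_rep l) x = vzero) by (rewrite Hz; unfold Tsh, fzero; vring).
    rewrite E0 in E.
    rewrite (eval_rep_filter (inclass k0)) in E.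
    rewrite !filter_scale in E by (intros; reflexivity).
    rewrite (eval_scale_const s v k0 _ 0) in E.
    2:{ intros t Ht. apply filter_In in Ht. apply lam_class. apply Ht. }
    unfold fzero. rewrite E. unfold l', l2, Pn. vring. }
  assert (H2 := IHn l' ltac:(unfold l', scale_rep; rewrite length_map; lia) H1).
  assert (H3 : forall c, classeq c k0 = false -> eval_rep (filter (inclass c) l) = fzero).
  { intros c Hc.
    assert (Ef : filter (inclass c) l' = scale_rep s v k0 (filter (inclass c) l)).
    { unfold l'. rewrite filter_scale by (intros; reflexivity). unfold l2. rewrite filter_sub; auto.
      intros t Ht. unfold Pn, inclass in *. destruct (classeq (key t) k0) eqn:E; auto.
      rewrite classeq_sym in Ht. rewrite (classeq_trans _ _ _ Ht E) in Hc. discriminate. }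
    destruct (filter (inclass c) l) as [|t1 rr] eqn:Ef2. reflexivity.
    assert (Ht1 : In t1 (filter (inclass c) l)) by (rewrite Ef2; left; auto).
    apply filter_In in Ht1. destruct Ht1 as [Ht1l Ht1c].
    assert (Hmu : lam s v k0 (key t1) <> 0).
    { apply Hsv; auto. unfold inclass in Ht1c. destruct (classeq (key t1) k0) eqn:E; auto.
      rewrite classeq_sym in Ht1c. rewrite (classeq_trans _ _ _ Ht1c E) in Hc. discriminate. }
    apply functional_extensionality; intro x.
    assert (E := H2 c). rewrite Ef, <- Ef2 in E.
    assert (E' : eval_rep (scale_rep s v k0 (filter (inclass c) l)) x = vzero) by (rewrite E; reflexivity).
    rewrite (eval_scale_const s v k0 _ (lam s v k0 (key t1))) in E'.
    2:{ intros t Ht. apply filter_In in Ht. destruct Ht as [_ Ht]. unfold inclass in Ht.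
        rewrite (lam_classeq _ _ _ _ _ Ht). symmetry. apply lam_classeq. exact Ht1c. }
    rewrite Ef2 in E'. apply vscale_zero in E'; auto. }
  intros c. destruct (classeq c k0) eqn:Hc; [|apply H3; auto].
  assert (Eq : filter (inclass c) l = filter (inclass k0) l).
  { apply filter_ext. intro t. unfold inclass. apply Bool.eq_true_iff_eq. split; intro H.
    - eapply classeq_trans; eauto.
    - rewrite classeq_sym in Hc. eapply classeq_trans; eauto. }
  rewrite Eq.
  assert (H4 : eval_rep l2 = fzero).
  { apply Q_zero. intro c'. destruct (classeq c' k0) eqn:Hc'.
    - rewrite filter_none. reflexivity.
      intros t Ht. unfold l2 in Ht. apply filter_In in Ht. destruct Ht as [_ Ht].
      unfold Pn, inclass in *. destruct (classeq (key t) c') eqn:E; auto.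
      rewrite (classeq_trans _ _ _ E Hc') in Ht. discriminate.
    - unfold l2. rewrite filter_sub. apply H3; auto.
      intros t Ht. unfold Pn, inclass in *. destruct (classeq (key t) k0) eqn:E; auto.
      rewrite classeq_sym in Ht. rewrite (classeq_trans _ _ _ Ht E) in Hc'. discriminate. }
  apply functional_extensionality; intro x.
  assert (E := eval_rep_filter (inclass k0) l x).
  rewrite Hz in E. fold Pn in E. fold l2 in E. rewrite H4 in E. unfold fzero in *.
  rewrite E. vring.
Qed.

Lemma uniq l : eval_rep l = fzero -> forall c, eval_rep (filter (inclass c) l) = fzero.
Proof. intros; apply (uniq_aux (S (length l))); auto. Qed.

Lemma mode_neg c A B x : mode (zneg c) A B x = mode c A (vscale (-1) B) x.
Proof.
  unfold mode. rewrite zR_neg, vdot_scalel.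
  replace (-1 * vdot (zR c) x) with (- vdot (zR c) x) by ring. rewrite cos_neg, sin_neg. vring.
Qed.

Lemma zeqb_neg0 c : zeqb (zneg c) zzero = zeqb c zzero.
Proof. destruct c as [a b d]; unfold zeqb, zneg, zzero; simpl.
  destruct a, b, d; reflexivity. Qed.

Lemma leray_neg c v : leray_symbol (zneg c) v = leray_symbol c v.
Proof.
  unfold leray_symbol. rewrite zeqb_neg0. destruct (zeqb c zzero); auto.
  rewrite zR_neg. 
  replace (vdot (vscale (-1) (zR c)) (vscale (-1) (zR c))) with (vdot (zR c) (zR c)) by (unfold vdot, vscale; simpl; ring).
  unfold vdot, vscale, vadd; simpl. apply V3_eq; simpl; unfold Rdiv; ring.
Qed.

Lemma leray_add c a b : leray_symbol c (vadd a b) = vadd (leray_symbol c a) (leray_symbol c b).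
Proof.
  unfold leray_symbol. destruct (zeqb c zzero). unfold vzero, vadd; simpl. f_equal; ring.
  unfold vdot, vscale, vadd; simpl. apply V3_eq; simpl; unfold Rdiv; ring.
Qed.

Lemma leray_scale c r a : leray_symbol c (vscale r a) = vscale r (leray_symbol c a).
Proof.
  unfold leray_symbol. destruct (zeqb c zzero). unfold vzero, vscale; simpl. f_equal; ring.
  unfold vdot, vscale, vadd; simpl. apply V3_eq; simpl; unfold Rdiv; ring.
Qed.

Lemma leray_zero c : leray_symbol c vzero = vzero.
Proof. replace vzero with (vscale 0 vzero) by vring. rewrite leray_scale. vring. Qed.

Definition sgn (c k : Z3) : R := if zeqb k c then 1 else -1.
Definition NA (L : rep) : V3 := fold_right (fun t acc => match t with (k,A,B) => vadd A acc end) vzero L.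
Definition NB (c : Z3) (L : rep) : V3 :=
  fold_right (fun t acc => match t with (k,A,B) => vadd (vscale (sgn c k) B) acc end) vzero L.

Lemma class_mode c L x : (forall t, In t L -> classeq (key t) c = true) ->
  eval_rep L x = mode c (NA L) (NB c L) x.
Proof.
  induction L as [|[[k A] B] L IH]; intro H.
  - unfold mode; simpl. unfold fzero. vring.
  - rewrite eval_rep_cons. rewrite IH by (intros; apply H; right; auto).
    assert (Hk : classeq k c = true) by (apply (H (k,A,B)); left; auto).
    simpl. unfold sgn. destruct (zeqb k c) eqn:E.
    + apply zeqb_spec in E. subst. unfold mode. vring.
    + apply classeq_spec in Hk. destruct Hk as [Hk|Hk]. apply zeqb_spec in Hk; congruence.
      subst. rewrite mode_neg. unfold mode. vring.
Qed.

Lemma proj_filter c l : filter (inclass c) (proj_rep l) = proj_rep (filter (inclass c) l).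
Proof.
  unfold proj_rep. rewrite filter_map_swap. f_equal. apply filter_ext. intros [[k A] B]. reflexivity.
Qed.

Lemma proj_class c L : (forall t, In t L -> classeq (key t) c = true) ->
  forall t, In t (proj_rep L) -> classeq (key t) c = true.
Proof.
  induction L as [|[[k A] B] L IH]; simpl; intros H t Ht. contradiction.
  destruct Ht as [<-|Ht]. apply (H (k,A,B)); auto. apply IH; auto.
Qed.

Lemma NA_proj c L : (forall t, In t L -> classeq (key t) c = true) ->
  NA (proj_rep L) = leray_symbol c (NA L).
Proof.
  induction L as [|[[k A] B] L IH]; intro H; simpl. rewrite leray_zero; auto.
  rewrite IH by (intros; apply H; right; auto). rewrite leray_add. f_equal.
  assert (Hk : classeq k c = true) by (apply (H (k,A,B)); left; auto).
  apply classeq_spec in Hk. destruct Hk as [->| ->]; auto. apply leray_neg.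
Qed.

Lemma NB_proj c L : (forall t, In t L -> classeq (key t) c = true) ->
  NB c (proj_rep L) = leray_symbol c (NB c L).
Proof.
  induction L as [|[[k A] B] L IH]; intro H; simpl. rewrite leray_zero; auto.
  rewrite IH by (intros; apply H; right; auto). rewrite leray_add, leray_scale. f_equal.
  assert (Hk : classeq k c = true) by (apply (H (k,A,B)); left; auto).
  f_equal. apply classeq_spec in Hk. destruct Hk as [->| ->]; auto. apply leray_neg.
Qed.

Lemma zzero_dec c : zeqb c zzero = false -> vdot (zR c) (zR c) <> 0.
Proof.
  intros H E. destruct c as [a b d]. unfold vdot, zR in E; simpl in E.
  assert (IZR a = 0 /\ IZR b = 0 /\ IZR d = 0) as [Ha [Hb Hd]] by (split; [|split]; nra).
  apply eq_IZR in Ha, Hb, Hd. subst. discriminate.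
Qed.

Lemma mode_zero c A B : zeqb c zzero = false -> mode c A B = fzero -> A = vzero /\ B = vzero.
Proof.
  intros Hc E. split.
  - assert (E0 := f_equal (fun f => f vzero) E). simpl in E0. unfold mode, fzero in E0.
    replace (vdot (zR c) vzero) with 0 in E0 by (unfold vdot; simpl; ring).
    rewrite cos_0, sin_0 in E0. rewrite <- E0. vring.
  - set (x := vscale (PI / 2 / vdot (zR c) (zR c)) (zR c)).
    assert (E0 := f_equal (fun f => f x) E). simpl in E0. unfold mode, fzero in E0.
    replace (vdot (zR c) x) with (PI/2) in E0.
    2:{ unfold x. assert (Hd := zzero_dec c Hc). 
        replace (vdot (zR c) (vscale (PI / 2 / vdot (zR c) (zR c)) (zR c))) with
          (PI / 2 / vdot (zR c) (zR c) * vdot (zR c) (zR c)) by (unfold vdot, vscale; simpl; ring).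
        field; auto. }
    rewrite cos_PI2, sin_PI2 in E0. rewrite <- E0. vring.
Qed.

Lemma proj_zero l : eval_rep l = fzero -> eval_rep (proj_rep l) = fzero.
Proof.
  intro Hz. apply Q_zero. intro c. rewrite proj_filter.
  assert (Hc := uniq l Hz c).
  set (L := filter (inclass c) l) in *.
  assert (HL : forall t, In t L -> classeq (key t) c = true).
  { intros t Ht. unfold L in Ht. apply filter_In in Ht. apply Ht. }
  apply functional_extensionality; intro x.
  rewrite (class_mode c (proj_rep L)) by (apply proj_class; auto).
  rewrite (NA_proj c L), (NB_proj c L) by auto.
  destruct (zeqb c zzero) eqn:E0.
  - unfold leray_symbol. rewrite E0. unfold mode, fzero. vring.
  - assert (Hm : mode c (NA L) (NB c L) = fzero).
    { apply functional_extensionality; intro y. rewrite <- (class_mode c L) by auto. rewrite Hc. reflexivity. }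
    destruct (mode_zero c _ _ E0 Hm) as [-> ->]. rewrite leray_zero. unfold mode, fzero. vring.
Qed.

Definition negrep (l : rep) : rep :=
  map (fun t => match t with (k,A,B) => (k, vscale (-1) A, vscale (-1) B) end) l.

Lemma eval_negrep l x : eval_rep (negrep l) x = vscale (-1) (eval_rep l x).
Proof.
  induction l as [|[[k A] B] l IH]; simpl. unfold fzero. vring.
  unfold fadd. rewrite IH. unfold mode. vring.
Qed.

Lemma proj_negrep l : proj_rep (negrep l) = negrep (proj_rep l).
Proof.
  induction l as [|[[k A] B] l IH]; simpl; auto. rewrite IH, !leray_scale. auto.
Qed.

Lemma proj_app l1 l2 : proj_rep (l1 ++ l2) = proj_rep l1 ++ proj_rep l2.
Proof. apply map_app. Qed.

Lemma Leray_rep l : Leray (eval_rep l) = eval_rep (proj_rep l).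
Proof.
  unfold Leray.
  pose proof (epsilon_spec (inhabits fzero)
    (fun g => exists l', eval_rep l = eval_rep l' /\ g = eval_rep (proj_rep l'))
    (ex_intro _ (eval_rep (proj_rep l)) (ex_intro _ l (conj eq_refl eq_refl)))) as [l' [E1 E2]].
  rewrite E2.
  assert (HD : eval_rep (l ++ negrep l') = fzero).
  { apply functional_extensionality; intro x. rewrite eval_rep_app, eval_negrep, E1. unfold fzero. vring. }
  apply proj_zero in HD. rewrite proj_app, proj_negrep in HD.
  apply functional_extensionality; intro x.
  assert (E := f_equal (fun f => f x) HD). simpl in E.
  rewrite eval_rep_app, eval_negrep in E. unfold fzero in E.
  apply V3_eq; apply (f_equal v1) in E || idtac.
  - simpl in E. lra.
  - assert (E' := f_equal v2 (f_equal (fun f => f x) HD)). simpl in E'.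
    rewrite eval_rep_app, eval_negrep in E'. simpl in E'. lra.
  - assert (E' := f_equal v3 (f_equal (fun f => f x) HD)). simpl in E'.
    rewrite eval_rep_app, eval_negrep in E'. simpl in E'. lra.
Qed.

Lemma Bop_rep l1 l2 : Bop (eval_rep l1) (eval_rep l2) = eval_rep (proj_rep (advrep l1 l2 ++ advrep l2 l1)).
Proof. unfold Bop. rewrite advsum_rep. apply Leray_rep. Qed.

Definition vadd4 a b c d := vadd (vadd a b) (vadd c d).

Definition PP j k A B C D := vscale (1/2) (vadd4 (vscale (vdot A (zR k)) D) (vscale (vdot C (zR j)) B)
                                               (vscale (vdot B (zR k)) C) (vscale (vdot D (zR j)) A)).
Definition QQ j k A B C D := vscale (1/2) (vadd4 (vscale (- vdot A (zR k)) C) (vscale (vdot D (zR j)) B)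
                                               (vscale (vdot B (zR k)) D) (vscale (- vdot C (zR j)) A)).
Definition RR j k A B C D := vscale (1/2) (vadd4 (vscale (vdot A (zR k)) D) (vscale (vdot C (zR j)) B)
                                               (vscale (- vdot B (zR k)) C) (vscale (- vdot D (zR j)) A)).
Definition SS j k A B C D := vscale (1/2) (vadd4 (vscale (vdot A (zR k)) C) (vscale (- vdot D (zR j)) B)
                                               (vscale (vdot B (zR k)) D) (vscale (- vdot C (zR j)) A)).

Lemma mode_rep k A B : mode k A B = eval_rep ((k,A,B)::nil).
Proof. apply functional_extensionality; intro x. simpl. unfold fadd, fzero. vring. Qed.

Lemma zadd_comm j k : zadd k j = zadd j k.
Proof. destruct j, k; unfold zadd; simpl; f_equal; lia. Qed.
Lemma zsub_anti j k : zsub k j = zneg (zsub j k).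
Proof. destruct j, k; unfold zsub, zneg; simpl; f_equal; lia. Qed.

Lemma Bop_formula j k A B C D :
  Bop (mode j A B) (mode k C D) =
  fadd (mode (zadd j k) (leray_symbol (zadd j k) (PP j k A B C D)) (leray_symbol (zadd j k) (QQ j k A B C D)))
       (mode (zsub j k) (leray_symbol (zsub j k) (RR j k A B C D)) (leray_symbol (zsub j k) (SS j k A B C D))).
Proof.
  rewrite (mode_rep j A B), (mode_rep k C D), Bop_rep. apply functional_extensionality; intro x.
  unfold advrep, mulrep, drep, mul2, proj_rep. cbn [flat_map map app].
  rewrite !eval_rep_cons, !eval_rep_nil.
  rewrite !(zadd_comm j k), !(zsub_anti j k), !leray_neg, !mode_neg.
  unfold PP, QQ, RR, SS, vadd4.
  repeat (rewrite ?leray_add, ?leray_scale).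
  generalize (leray_symbol (zadd j k) A) (leray_symbol (zadd j k) B) (leray_symbol (zadd j k) C)
    (leray_symbol (zadd j k) D) (leray_symbol (zsub j k) A) (leray_symbol (zsub j k) B)
    (leray_symbol (zsub j k) C) (leray_symbol (zsub j k) D).
  intros LA LB LC LD MA MB MC MD.
  unfold mode, fadd.
  generalize (cos (vdot (zR (zadd j k)) x)) (sin (vdot (zR (zadd j k)) x))
    (cos (vdot (zR (zsub j k)) x)) (sin (vdot (zR (zsub j k)) x)).
  intros c1 s1 c2 s2.
  unfold vdot, ev1, ev2, ev3. destruct j as [j1 j2 j3], k as [k1 k2 k3]. unfold zR. cbn [z1 z2 z3].
  apply V3_eq; cbn [v1 v2 v3 vadd vscale vzero]. all: unfold Rdiv; ring.
Qed.

Ltac fext := apply functional_extensionality; intro.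

Lemma span_in S g : S g -> span S g.
Proof.
  intro H. replace g with (fadd (fscale 1 g) fzero). apply span_cons; auto. apply span_zero.
  fext. unfold fadd, fscale, fzero. vring.
Qed.

Lemma span_add S f g : span S f -> span S g -> span S (fadd f g).
Proof.
  intros Hf Hg. induction Hf.
  - replace (fadd fzero g) with g; auto. fext. unfold fadd, fzero. vring.
  - replace (fadd (fadd (fscale c g0) h) g) with (fadd (fscale c g0) (fadd h g)).
    apply span_cons; auto. fext. unfold fadd, fscale. vring.
Qed.

Lemma span_scale S r f : span S f -> span S (fscale r f).
Proof.
  intro Hf. induction Hf.
  - replace (fscale r fzero) with fzero. apply span_zero. fext. unfold fscale, fzero. vring.
  - replace (fscale r (fadd (fscale c g) h)) with (fadd (fscale (r*c) g) (fscale r h)).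
    apply span_cons; auto. fext. unfold fadd, fscale. vring.
Qed.

Lemma span_span S T : subset S (span T) -> subset (span S) (span T).
Proof.
  intros H f Hf. induction Hf. apply span_zero.
  apply span_add; auto. apply span_scale; auto.
Qed.

Lemma nz_zeqb k : k <> zzero -> zeqb k zzero = false.
Proof. intro H. destruct (zeqb k zzero) eqn:E; auto. apply zeqb_spec in E. contradiction. Qed.

Lemma Fk_mode k f : k <> zzero -> Fk k f -> exists A B, vdot A (zR k) = 0 /\ vdot B (zR k) = 0 /\ f = mode k A B.
Proof. intros Hk H. unfold Fk in H. rewrite nz_zeqb in H; auto. Qed.

Lemma mode_zero_f m : mode m vzero vzero = fzero.
Proof. fext. unfold mode, fzero. vring. Qed.

Lemma leray_perp m v : zeqb m zzero = false -> vdot (leray_symbol m v) (zR m) = 0.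
Proof.
  intro E. unfold leray_symbol. rewrite E. assert (Hd := zzero_dec m E).
  revert Hd. generalize (zR m). intros z Hd. unfold vdot in *. destruct v, z; simpl in *. field. auto.
Qed.

Lemma mode_L_in_Fk m U V : Fk m (mode m (leray_symbol m U) (leray_symbol m V)).
Proof.
  unfold Fk. destruct (zeqb m zzero) eqn:E.
  - unfold leray_symbol. rewrite E. apply mode_zero_f.
  - exists (leray_symbol m U), (leray_symbol m V). split; [|split]; auto; apply leray_perp; auto.
Qed.

Lemma part1 : forall k : Z3, k <> zzero ->
     forall e e' : Field, Fk k e -> Fk k e' -> Bop e e' = fzero.
Proof.
  intros k Hk e e' He He'.
  destruct (Fk_mode k e Hk He) as [A [B [HA [HB ->]]]].
  destruct (Fk_mode k e' Hk He') as [C [D [HC [HD ->]]]].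
  rewrite Bop_formula.
  assert (Z0 : zsub k k = zzero) by (destruct k; unfold zsub, zzero; simpl; f_equal; lia).
  rewrite Z0. unfold leray_symbol at 3 4. simpl.
  unfold PP, QQ. rewrite HA, HB, HC, HD.
  replace (vscale (1 / 2) (vadd4 (vscale 0 D) (vscale 0 B) (vscale 0 C) (vscale 0 A))) with vzero by (unfold vadd4; vring).
  replace (vscale (1 / 2) (vadd4 (vscale (- 0) C) (vscale 0 B) (vscale 0 D) (vscale (- 0) A))) with vzero by (unfold vadd4; vring).
  rewrite leray_zero, !mode_zero_f. fext. unfold fadd, fzero. vring.
Qed.

Lemma part2a j k : j <> zzero -> k <> zzero ->
  subset (span (Bset j k)) (span (set_union (Fk (zsub j k)) (Fk (zadd j k)))).
Proof.
  intros Hj Hk. apply span_span. intros f [e [e' [He [He' ->]]]].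
  destruct (Fk_mode j e Hj He) as [A [B [HA [HB ->]]]].
  destruct (Fk_mode k e' Hk He') as [C [D [HC [HD ->]]]].
  rewrite Bop_formula. apply span_add; apply span_in.
  - right. apply mode_L_in_Fk.
  - left. apply mode_L_in_Fk.
Qed.

Definition scal (c : R) (l : rep) : rep :=
  map (fun t => match t with (k,A,B) => (k, vscale c A, vscale c B) end) l.

Lemma eval_scal c l x : eval_rep (scal c l) x = vscale c (eval_rep l x).
Proof.
  induction l as [|[[k A] B] l IH]; simpl. unfold fzero. vring.
  unfold fadd. rewrite IH. unfold mode. vring.
Qed.

Lemma proj_scal c l : proj_rep (scal c l) = scal c (proj_rep l).
Proof. induction l as [|[[k A] B] l IH]; simpl; auto. rewrite IH, !leray_scale. auto. Qed.

Lemma lin_rep c1 c2 l1 l2 :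
  fadd (fscale c1 (eval_rep l1)) (fscale c2 (eval_rep l2)) = eval_rep (scal c1 l1 ++ scal c2 l2).
Proof. fext. rewrite eval_rep_app, !eval_scal. reflexivity. Qed.

Definition Trig (f : Field) := exists l, f = eval_rep l.

Lemma Trig_mode k A B : Trig (mode k A B).
Proof. exists ((k,A,B)::nil). apply mode_rep. Qed.

Lemma Trig_Bop f g : Trig f -> Trig g -> Trig (Bop f g).
Proof. intros [l1 ->] [l2 ->]. rewrite Bop_rep. eexists; reflexivity. Qed.

Lemma Trig_lin c1 c2 f1 f2 : Trig f1 -> Trig f2 -> Trig (fadd (fscale c1 f1) (fscale c2 f2)).
Proof. intros [l1 ->] [l2 ->]. rewrite lin_rep. eexists; reflexivity. Qed.

Lemma Leray_lin c1 c2 f1 f2 : Trig f1 -> Trig f2 ->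
  Leray (fadd (fscale c1 f1) (fscale c2 f2)) = fadd (fscale c1 (Leray f1)) (fscale c2 (Leray f2)).
Proof.
  intros [l1 ->] [l2 ->]. rewrite lin_rep, !Leray_rep, proj_app, !proj_scal, <- lin_rep. reflexivity.
Qed.

Lemma drep_scal d c l x : eval_rep (drep d (scal c l)) x = vscale c (eval_rep (drep d l) x).
Proof.
  induction l as [|[[k A] B] l IH]; simpl. unfold fzero. vring.
  unfold fadd. rewrite IH. unfold mode. vring.
Qed.

Lemma pderiv_lin c1 c2 f1 f2 d : Trig f1 -> Trig f2 ->
  pderiv (fadd (fscale c1 f1) (fscale c2 f2)) d = fadd (fscale c1 (pderiv f1 d)) (fscale c2 (pderiv f2 d)).
Proof.
  intros [l1 ->] [l2 ->]. rewrite lin_rep, !pderiv_rep. fext.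
  unfold drep at 1. rewrite map_app, eval_rep_app. fold (drep d (scal c1 l1)). fold (drep d (scal c2 l2)).
  rewrite !drep_scal. reflexivity.
Qed.

Lemma advect_lin_l c1 c2 f1 f2 g :
  advect (fadd (fscale c1 f1) (fscale c2 f2)) g = fadd (fscale c1 (advect f1 g)) (fscale c2 (advect f2 g)).
Proof. fext. unfold advect, fadd, fscale. vring. Qed.

Lemma advect_lin_r c1 c2 f1 f2 g : Trig f1 -> Trig f2 ->
  advect g (fadd (fscale c1 f1) (fscale c2 f2)) = fadd (fscale c1 (advect g f1)) (fscale c2 (advect g f2)).
Proof. intros H1 H2. unfold advect. rewrite !pderiv_lin by auto. fext. unfold fadd, fscale. vring. Qed.

Lemma Trig_advsum f g : Trig f -> Trig g -> Trig (fadd (advect f g) (advect g f)).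
Proof. intros [l1 ->] [l2 ->]. rewrite advsum_rep. eexists; reflexivity. Qed.

Lemma Bop_lin_l c1 c2 f1 f2 g : Trig f1 -> Trig f2 -> Trig g ->
  Bop (fadd (fscale c1 f1) (fscale c2 f2)) g = fadd (fscale c1 (Bop f1 g)) (fscale c2 (Bop f2 g)).
Proof.
  intros H1 H2 H3. unfold Bop. rewrite advect_lin_l, advect_lin_r by auto.
  rewrite <- Leray_lin by (apply Trig_advsum; auto).
  f_equal. fext. unfold fadd, fscale. vring.
Qed.

Definition Xp j k a b := vadd (vscale (vdot a (zR k)) b) (vscale (vdot b (zR j)) a).
Definition Xm j k a b := vadd (vscale (vdot a (zR k)) b) (vscale (- vdot b (zR j)) a).

Ltac bop_tac j k a b :=
  rewrite !Bop_formula; apply functional_extensionality; let x := fresh "x" in intro x; unfold fadd, fscale, PP, QQ, RR, SS, vadd4, Xp, Xm;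
  repeat (rewrite ?leray_add, ?leray_scale); rewrite ?leray_zero;
  generalize (leray_symbol (zadd j k) a) (leray_symbol (zadd j k) b)
    (leray_symbol (zsub j k) a) (leray_symbol (zsub j k) b);
  let LA := fresh in let LB := fresh in let MA := fresh in let MB := fresh in
  intros LA LB MA MB;
  unfold mode;
  match goal with |- _ = _ => idtac end;
  generalize (cos (vdot (zR (zadd j k)) x)) (sin (vdot (zR (zadd j k)) x))
    (cos (vdot (zR (zsub j k)) x)) (sin (vdot (zR (zsub j k)) x));
  let c1 := fresh in let s1 := fresh in let c2 := fresh in let s2 := fresh in
  intros c1 s1 c2 s2;
  clear x; unfold vdot; destruct j, k; unfold zR; cbn [z1 z2 z3];
  apply V3_eq; cbn [v1 v2 v3 vadd vscale vzero]; field.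

Lemma L_sdiff j k a b :
  fadd (fscale 1 (Bop (mode j vzero a) (mode k vzero b))) (fscale (-1) (Bop (mode j a vzero) (mode k b vzero)))
  = mode (zadd j k) vzero (leray_symbol (zadd j k) (Xp j k a b)).
Proof. bop_tac j k a b. Qed.

Lemma L_ssum j k a b :
  fadd (fscale 1 (Bop (mode j vzero a) (mode k vzero b))) (fscale 1 (Bop (mode j a vzero) (mode k b vzero)))
  = mode (zsub j k) vzero (leray_symbol (zsub j k) (Xm j k a b)).
Proof. bop_tac j k a b. Qed.

Lemma L_csum j k a b :
  fadd (fscale 1 (Bop (mode j a vzero) (mode k vzero b))) (fscale 1 (Bop (mode j vzero a) (mode k b vzero)))
  = mode (zadd j k) (leray_symbol (zadd j k) (Xp j k a b)) vzero.
Proof. bop_tac j k a b. Qed.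

Lemma L_cdiff j k a b :
  fadd (fscale 1 (Bop (mode j a vzero) (mode k vzero b))) (fscale (-1) (Bop (mode j vzero a) (mode k b vzero)))
  = mode (zsub j k) (leray_symbol (zsub j k) (Xm j k a b)) vzero.
Proof. bop_tac j k a b. Qed.

Definition jX := mkZ3 1 0 0.
Definition jY := mkZ3 0 1 0.
Definition jZ := mkZ3 0 0 1.
Definition jXY := mkZ3 1 1 0.
Definition jXYZ := mkZ3 1 1 1.

Lemma kXY : zadd jX jY = jXY. Proof. reflexivity. Qed.
Lemma kXYZ : zadd jXY jZ = jXYZ. Proof. reflexivity. Qed.
Lemma nXY : zeqb jXY zzero = false. Proof. reflexivity. Qed.
Lemma nXYZ : zeqb jXYZ zzero = false. Proof. reflexivity. Qed.

Ltac vcomp := unfold Xp, Xm, vdot, vadd, vscale, vzero, zR, ev1, ev2, ev3, jX, jY, jZ, jXY, jXYZ;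
  cbn [v1 v2 v3 z1 z2 z3].

Lemma Gs_eq : fadd (fscale 1 (Bop (mode jX vzero ev3) (mode jY vzero ev1)))
                   (fscale (-1) (Bop (mode jX ev3 vzero) (mode jY ev1 vzero)))
              = mode jXY vzero ev3.
Proof.
  rewrite L_sdiff, kXY. f_equal. unfold leray_symbol. rewrite nXY. vcomp. apply V3_eq; cbn [v1 v2 v3]; field.
Qed.

Lemma Gc_eq : fadd (fscale 1 (Bop (mode jX ev3 vzero) (mode jY vzero ev1)))
                   (fscale 1 (Bop (mode jX vzero ev3) (mode jY ev1 vzero)))
              = mode jXY ev3 vzero.
Proof.
  rewrite L_csum, kXY. f_equal. unfold leray_symbol. rewrite nXY. vcomp. apply V3_eq; cbn [v1 v2 v3]; field.
Qed.

Lemma Fk_intro k A B : zeqb k zzero = false -> vdot A (zR k) = 0 -> vdot B (zR k) = 0 -> Fk k (mode k A B).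
Proof. intros H1 H2 H3. unfold Fk. rewrite H1. exists A, B. auto. Qed.

Lemma FcX A B : vdot A (zR jX) = 0 -> vdot B (zR jX) = 0 -> Fcoord (mode jX A B).
Proof. intros. left. apply Fk_intro; auto. Qed.
Lemma FcY A B : vdot A (zR jY) = 0 -> vdot B (zR jY) = 0 -> Fcoord (mode jY A B).
Proof. intros. right; left. apply Fk_intro; auto. Qed.
Lemma FcZ A B : vdot A (zR jZ) = 0 -> vdot B (zR jZ) = 0 -> Fcoord (mode jZ A B).
Proof. intros. right; right. apply Fk_intro; auto. Qed.

Lemma BB_in e e' e'' : Fcoord e -> Fcoord e' -> Fcoord e'' -> span BBset (Bop (Bop e e') e'').
Proof. intros. apply span_in. exists e, e', e''. auto. Qed.

Ltac dz := vcomp; ring.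

Lemma part3 : subset (Fk (mkZ3 1 1 1)) (span BBset).
Proof.
  intros f Hf. change (mkZ3 1 1 1) with jXYZ in Hf.
  unfold Fk in Hf. rewrite nXYZ in Hf. destruct Hf as [U [V [HU [HV ->]]]].
  replace (mode jXYZ U V) with (fadd (mode jXYZ U vzero) (mode jXYZ vzero V))
    by (fext; unfold fadd, mode; vring).
  apply span_add.
  -
    set (b := mkV3 (2 * v3 U + v1 U) (v3 U - v1 U) 0).
    assert (EU : leray_symbol jXYZ (Xp jXY jZ ev3 b) = U).
    { unfold leray_symbol. rewrite nXYZ. unfold b. destruct U as [p q r].
      unfold vdot, zR, jXYZ in HU; cbn [v1 v2 v3 z1 z2 z3] in HU.
      assert (q = - p - r) by lra. subst q. vcomp. apply V3_eq; cbn [v1 v2 v3]; field. }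
    rewrite <- EU, <- kXYZ, <- L_csum, <- Gs_eq, <- Gc_eq.
    apply span_add; apply span_scale; rewrite Bop_lin_l;
      try (apply Trig_Bop; apply Trig_mode); try apply Trig_mode;
      apply span_add; apply span_scale; apply BB_in;
      first [apply FcX | apply FcY | apply FcZ]; try unfold b; dz.
  -
    set (b := mkV3 (2 * v3 V + v1 V) (v3 V - v1 V) 0).
    assert (EV : leray_symbol jXYZ (Xp jXY jZ ev3 b) = V).
    { unfold leray_symbol. rewrite nXYZ. unfold b. destruct V as [p q r].
      unfold vdot, zR, jXYZ in HV; cbn [v1 v2 v3 z1 z2 z3] in HV.
      assert (q = - p - r) by lra. subst q. vcomp. apply V3_eq; cbn [v1 v2 v3]; field. }
    rewrite <- EV, <- kXYZ, <- L_sdiff, <- Gs_eq, <- Gc_eq.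
    apply span_add; apply span_scale; rewrite Bop_lin_l;
      try (apply Trig_Bop; apply Trig_mode); try apply Trig_mode;
      apply span_add; apply span_scale; apply BB_in;
      first [apply FcX | apply FcY | apply FcZ]; try unfold b; dz.
Qed.

Definition cross a b := mkV3 (v2 a * v3 b - v3 a * v2 b) (v3 a * v1 b - v1 a * v3 b) (v1 a * v2 b - v2 a * v1 b).
Definition LSv (m v : V3) := vadd v (vscale (- (vdot v m / vdot m m)) m).
Definition Xs (s : R) (J K a b : V3) := vadd (vscale (vdot a K) b) (vscale (s * vdot b J) a).

Ltac vunf := unfold LSv, Xs, cross, vdot, vadd, vscale, vzero in *; cbn [v1 v2 v3] in *.

Lemma orth3 m n w R : vdot m n = 0 -> vdot n w = 0 -> vdot w m = 0 ->
  vdot m m <> 0 -> vdot n n <> 0 -> vdot w w <> 0 ->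
  vdot R m = 0 -> vdot R n = 0 -> vdot R w = 0 -> R = vzero.
Proof.
  intros Hmn Hnw Hwm Hm Hn Hw H1 H2 H3.
  set (D := vdot m (cross n w)).
  assert (ED : D * D = vdot m m * vdot n n * vdot w w).
  { assert (E : D * D = vdot m m * vdot n n * vdot w w + 2 * vdot m n * vdot n w * vdot w m
       - vdot m m * vdot n w * vdot n w - vdot n n * vdot w m * vdot w m - vdot w w * vdot m n * vdot m n).
    { unfold D. destruct m as [m1 m2 m3], n as [n1 n2 n3], w as [w1 w2 w3]; vunf. ring. }
    rewrite E, Hmn, Hnw, Hwm. ring. }
  assert (HD : D <> 0).
  { intro h. rewrite h in ED. assert (vdot m m * vdot n n * vdot w w <> 0).
    { repeat (apply Rmult_integral_contrapositive; split); auto. }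
    lra. }
  assert (ER : vscale D R = vadd (vscale (vdot R m) (cross n w)) (vadd (vscale (vdot R n) (cross w m)) (vscale (vdot R w) (cross m n)))).
  { unfold D. destruct m as [m1 m2 m3], n as [n1 n2 n3], w as [w1 w2 w3], R as [r1 r2 r3]. vunf. apply V3_eq; cbn [v1 v2 v3]; ring. }
  rewrite H1, H2, H3 in ER.
  destruct R as [r1 r2 r3]. vunf. injection ER. intros E3 E2 E1.
  apply V3_eq; cbn [v1 v2 v3].
  - apply (Rmult_eq_reg_l D); auto. rewrite E1. ring.
  - apply (Rmult_eq_reg_l D); auto. rewrite E2. ring.
  - apply (Rmult_eq_reg_l D); auto. rewrite E3. ring.
Qed.

Lemma vdot_lin3 U a n b w X :
  vdot (vadd U (vadd (vscale a n) (vscale b w))) X = vdot U X + a * vdot n X + b * vdot w X.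
Proof. unfold vdot, vadd, vscale; cbn [v1 v2 v3]; ring. Qed.

Lemma vdot_addsc a c b X : vdot (vadd a (vscale c b)) X = vdot a X + c * vdot b X.
Proof. unfold vdot, vadd, vscale; cbn [v1 v2 v3]; ring. Qed.

Lemma vdot_sym a b : vdot a b = vdot b a.
Proof. unfold vdot; ring. Qed.

Lemma decomp (J K U : V3) (s : R) : (s = 1 \/ s = -1) ->
  vdot (cross J K) (cross J K) <> 0 -> vdot J J <> vdot K K ->
  vdot (vadd J (vscale s K)) (vadd J (vscale s K)) <> 0 ->
  vdot U (vadd J (vscale s K)) = 0 ->
  exists a1 b1 a2 b2, vdot a1 J = 0 /\ vdot b1 K = 0 /\ vdot a2 J = 0 /\ vdot b2 K = 0 /\
    U = vadd (LSv (vadd J (vscale s K)) (Xs s J K a1 b1)) (LSv (vadd J (vscale s K)) (Xs s J K a2 b2)).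
Proof.
  intros Hs HN HJK Hm HU.
  set (m := vadd J (vscale s K)) in *.
  set (n := cross J K) in *.
  set (N2 := vdot n n) in *.
  set (v := cross (vadd J (vscale (-s) K)) n).
  set (w := LSv m v).
  assert (Hnm : vdot n m = 0).
  { unfold n, m. destruct J as [j1 j2 j3], K as [k1 k2 k3]. vunf. ring. }
  assert (Hvn : vdot v n = 0).
  { unfold v. destruct J as [j1 j2 j3], K as [k1 k2 k3]. unfold n. vunf. ring. }
  assert (Hwm : vdot w m = 0).
  { unfold w, LSv. rewrite vdot_addsc. field. auto. }
  assert (Hnw : vdot n w = 0).
  { unfold w, LSv. rewrite vdot_sym, vdot_addsc, (vdot_sym m n), Hvn, Hnm. ring. }
  assert (Hw2 : vdot w w * vdot m m = vdot v v * vdot m m - vdot v m * vdot v m).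
  { unfold w, LSv. clearbody v. unfold vdot in *; destruct m as [m1 m2 m3], v as [x1 x2 x3]; vunf. field. auto. }
  assert (I7 : vdot v v * vdot m m - vdot v m * vdot v m = N2 * (vdot J J - vdot K K) * (vdot J J - vdot K K)).
  { unfold v, m, N2, n. destruct J as [j1 j2 j3], K as [k1 k2 k3]. destruct Hs; subst s; vunf; ring. }
  assert (Hw : vdot w w <> 0).
  { intro h. rewrite h, I7 in Hw2. 
    assert (N2 * (vdot J J - vdot K K) * (vdot J J - vdot K K) <> 0).
    { repeat (apply Rmult_integral_contrapositive; split); auto; lra. }
    lra. }
  set (al := vdot U n / N2). set (be := vdot U w / vdot w w).
  exists (vscale (s * al / N2) n), (cross K n), (vscale (s * be / N2) (cross J n)), (cross K n).
  split; [|split; [|split; [|split]]].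
  - unfold n. destruct J as [j1 j2 j3], K as [k1 k2 k3]. vunf. ring.
  - unfold n. destruct J as [j1 j2 j3], K as [k1 k2 k3]. vunf. ring.
  - unfold n. destruct J as [j1 j2 j3], K as [k1 k2 k3]. vunf. ring.
  - unfold n. destruct J as [j1 j2 j3], K as [k1 k2 k3]. vunf. ring.
  - assert (EA : LSv m (Xs s J K (vscale (s * al / N2) n) (cross K n)) = vscale al n).
    { clearbody al. unfold m, N2, n in *. destruct J as [j1 j2 j3], K as [k1 k2 k3].
      destruct Hs; subst s; vunf; apply V3_eq; cbn [v1 v2 v3]; field; repeat split; intro h; first [apply HN; rewrite <- h; ring | apply Hm; rewrite <- h; ring]. }
    assert (EB : LSv m (Xs s J K (vscale (s * be / N2) (cross J n)) (cross K n)) = vscale be w).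
    { clearbody be. unfold w, v, m, N2, n in *. destruct J as [j1 j2 j3], K as [k1 k2 k3].
      destruct Hs; subst s; vunf; apply V3_eq; cbn [v1 v2 v3]; field; repeat split; intro h; first [apply HN; rewrite <- h; ring | apply Hm; rewrite <- h; ring]. }
    rewrite EA, EB.
    set (R := vadd U (vadd (vscale (- al) n) (vscale (- be) w))).
    assert (HR : R = vzero).
    { apply (orth3 m n w R); auto.
      - rewrite vdot_sym; auto.
      - unfold R. rewrite vdot_lin3, HU, Hnm, Hwm. ring.
      - unfold R. rewrite vdot_lin3, (vdot_sym w n), Hnw. fold N2. unfold al. field. auto.
      - unfold R. rewrite vdot_lin3, Hnw. unfold be. field. auto. }
    unfold R in HR. clearbody w n. destruct U as [u1 u2 u3], n as [n1 n2 n3], w as [w1 w2 w3]. vunf. injection HR. intros. apply V3_eq; cbn [v1 v2 v3]; lra.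
Qed.

Lemma mode_add_s M P Q : mode M vzero (vadd P Q) = fadd (mode M vzero P) (mode M vzero Q).
Proof. fext. unfold fadd, mode. vring. Qed.
Lemma mode_add_c M P Q : mode M (vadd P Q) vzero = fadd (mode M P vzero) (mode M Q vzero).
Proof. fext. unfold fadd, mode. vring. Qed.
Lemma mode_split M U V : mode M U V = fadd (mode M U vzero) (mode M vzero V).
Proof. fext. unfold fadd, mode. vring. Qed.

Lemma leray_LSv M v : zeqb M zzero = false -> leray_symbol M v = LSv (zR M) v.
Proof. intro H. unfold leray_symbol. rewrite H. reflexivity. Qed.

Lemma Xp_Xs j k a b : Xp j k a b = Xs 1 (zR j) (zR k) a b.
Proof. unfold Xp, Xs. vring. Qed.
Lemma Xm_Xs j k a b : Xm j k a b = Xs (-1) (zR j) (zR k) a b.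
Proof. unfold Xm, Xs. vring. Qed.

Lemma vdot_zero_vec a : vdot a a = 0 -> a = vzero.
Proof.
  destruct a as [x y z]. unfold vdot; cbn [v1 v2 v3]. intro H.
  assert (x = 0) by nra. assert (y = 0) by nra. assert (z = 0) by nra. subst. reflexivity.
Qed.

Lemma vdot0 a : vdot vzero a = 0.
Proof. unfold vdot, vzero; cbn [v1 v2 v3]; ring. Qed.

Lemma Bset_span j k e e' : Fk j e -> Fk k e' -> span (Bset j k) (Bop e e').
Proof. intros. apply span_in. exists e, e'. auto. Qed.

Lemma comb_span j k c1 c2 A1 B1 C1 D1 A2 B2 C2 D2 :
  j <> zzero -> k <> zzero ->
  vdot A1 (zR j) = 0 -> vdot B1 (zR j) = 0 -> vdot C1 (zR k) = 0 -> vdot D1 (zR k) = 0 ->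
  vdot A2 (zR j) = 0 -> vdot B2 (zR j) = 0 -> vdot C2 (zR k) = 0 -> vdot D2 (zR k) = 0 ->
  span (Bset j k) (fadd (fscale c1 (Bop (mode j A1 B1) (mode k C1 D1))) (fscale c2 (Bop (mode j A2 B2) (mode k C2 D2)))).
Proof.
  intros Hj Hk. intros. apply span_add; apply span_scale; apply Bset_span; apply Fk_intro; auto; apply nz_zeqb; auto.
Qed.


Lemma HJK (j k : Z3) (Hj : j <> zzero) (Hk : k <> zzero) (Hli : lin_indep2 j k) (Hnorm : vnorm (zR j) <> vnorm (zR k)) : vdot (zR j) (zR j) <> vdot (zR k) (zR k).
Proof. intro h. apply Hnorm. unfold vnorm. rewrite h. reflexivity. Qed.

Lemma HN (j k : Z3) (Hj : j <> zzero) (Hk : k <> zzero) (Hli : lin_indep2 j k) (Hnorm : vnorm (zR j) <> vnorm (zR k)) : vdot (cross (zR j) (zR k)) (cross (zR j) (zR k)) <> 0.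
Proof.
  intro h. apply vdot_zero_vec in h.
  assert (E : vadd (vscale (vdot (zR j) (zR k)) (zR j)) (vscale (- vdot (zR j) (zR j)) (zR k)) = vzero).
  { transitivity (cross (zR j) (cross (zR j) (zR k))).
    - generalize (zR j) (zR k). intros [a1 a2 a3] [b1 b2 b3]. unfold cross, vdot, vadd, vscale. apply V3_eq; cbn [v1 v2 v3]; ring.
    - rewrite h. unfold cross, vzero. apply V3_eq; cbn [v1 v2 v3]; ring. }
  destruct (Hli _ _ E) as [_ H2].
  apply (zzero_dec j (nz_zeqb j Hj)). lra.
Qed.

Lemma Hm (j k : Z3) (Hj : j <> zzero) (Hk : k <> zzero) (Hli : lin_indep2 j k) (Hnorm : vnorm (zR j) <> vnorm (zR k)) s : vdot (vadd (zR j) (vscale s (zR k))) (vadd (zR j) (vscale s (zR k))) <> 0.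
Proof.
  intro h. apply vdot_zero_vec in h.
  assert (E : vadd (vscale 1 (zR j)) (vscale s (zR k)) = vzero) by (rewrite <- h; vring).
  destruct (Hli _ _ E). lra.
Qed.

Lemma key_nz (j k : Z3) (Hj : j <> zzero) (Hk : k <> zzero) (Hli : lin_indep2 j k) (Hnorm : vnorm (zR j) <> vnorm (zR k)) M s : zR M = vadd (zR j) (vscale s (zR k)) -> zeqb M zzero = false.
Proof.
  intro E. destruct (zeqb M zzero) eqn:Z; auto. apply zeqb_spec in Z. subst M.
  exfalso. apply (Hm j k Hj Hk Hli Hnorm s). rewrite <- E. unfold zR, zzero, vdot; cbn [z1 z2 z3 v1 v2 v3]. ring.
Qed.

Lemma zRp (j k : Z3) (Hj : j <> zzero) (Hk : k <> zzero) (Hli : lin_indep2 j k) (Hnorm : vnorm (zR j) <> vnorm (zR k)) : zR (zadd j k) = vadd (zR j) (vscale 1 (zR k)).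
Proof. rewrite zR_add. vring. Qed.
Lemma zRm (j k : Z3) (Hj : j <> zzero) (Hk : k <> zzero) (Hli : lin_indep2 j k) (Hnorm : vnorm (zR j) <> vnorm (zR k)) : zR (zsub j k) = vadd (zR j) (vscale (-1) (zR k)).
Proof. apply zR_sub. Qed.

Lemma plus_case (j k : Z3) (Hj : j <> zzero) (Hk : k <> zzero) (Hli : lin_indep2 j k) (Hnorm : vnorm (zR j) <> vnorm (zR k)) U V : vdot U (zR (zadd j k)) = 0 -> vdot V (zR (zadd j k)) = 0 ->
  span (Bset j k) (mode (zadd j k) U V).
Proof.
  intros HU HV. rewrite mode_split. assert (Hz := key_nz j k Hj Hk Hli Hnorm _ 1 (zRp j k Hj Hk Hli Hnorm)).
  rewrite (zRp j k Hj Hk Hli Hnorm) in HU, HV.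
  apply span_add.
  - destruct (decomp (zR j) (zR k) U 1 (or_introl eq_refl) (HN j k Hj Hk Hli Hnorm) (HJK j k Hj Hk Hli Hnorm) (Hm j k Hj Hk Hli Hnorm 1) HU) as [a1 [b1 [a2 [b2 [H1 [H2 [H3 [H4 E]]]]]]]].
    rewrite E, <- (zRp j k Hj Hk Hli Hnorm), <- !leray_LSv, <- !Xp_Xs, mode_add_c, <- !L_csum by auto.
    apply span_add; apply comb_span; auto; apply vdot0.
  - destruct (decomp (zR j) (zR k) V 1 (or_introl eq_refl) (HN j k Hj Hk Hli Hnorm) (HJK j k Hj Hk Hli Hnorm) (Hm j k Hj Hk Hli Hnorm 1) HV) as [a1 [b1 [a2 [b2 [H1 [H2 [H3 [H4 E]]]]]]]].
    rewrite E, <- (zRp j k Hj Hk Hli Hnorm), <- !leray_LSv, <- !Xp_Xs, mode_add_s, <- !L_sdiff by auto.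
    apply span_add; apply comb_span; auto; apply vdot0.
Qed.

Lemma minus_case (j k : Z3) (Hj : j <> zzero) (Hk : k <> zzero) (Hli : lin_indep2 j k) (Hnorm : vnorm (zR j) <> vnorm (zR k)) U V : vdot U (zR (zsub j k)) = 0 -> vdot V (zR (zsub j k)) = 0 ->
  span (Bset j k) (mode (zsub j k) U V).
Proof.
  intros HU HV. rewrite mode_split. assert (Hz := key_nz j k Hj Hk Hli Hnorm _ (-1) (zRm j k Hj Hk Hli Hnorm)).
  rewrite (zRm j k Hj Hk Hli Hnorm) in HU, HV.
  apply span_add.
  - destruct (decomp (zR j) (zR k) U (-1) (or_intror eq_refl) (HN j k Hj Hk Hli Hnorm) (HJK j k Hj Hk Hli Hnorm) (Hm j k Hj Hk Hli Hnorm (-1)) HU) as [a1 [b1 [a2 [b2 [H1 [H2 [H3 [H4 E]]]]]]]].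
    rewrite E, <- (zRm j k Hj Hk Hli Hnorm), <- !leray_LSv, <- !Xm_Xs, mode_add_c, <- !L_cdiff by auto.
    apply span_add; apply comb_span; auto; apply vdot0.
  - destruct (decomp (zR j) (zR k) V (-1) (or_intror eq_refl) (HN j k Hj Hk Hli Hnorm) (HJK j k Hj Hk Hli Hnorm) (Hm j k Hj Hk Hli Hnorm (-1)) HV) as [a1 [b1 [a2 [b2 [H1 [H2 [H3 [H4 E]]]]]]]].
    rewrite E, <- (zRm j k Hj Hk Hli Hnorm), <- !leray_LSv, <- !Xm_Xs, mode_add_s, <- !L_ssum by auto.
    apply span_add; apply comb_span; auto; apply vdot0.
Qed.

Lemma part2b (j k : Z3) (Hj : j <> zzero) (Hk : k <> zzero) (Hli : lin_indep2 j k) (Hnorm : vnorm (zR j) <> vnorm (zR k)) : subset (span (set_union (Fk (zsub j k)) (Fk (zadd j k)))) (span (Bset j k)).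
Proof.
  apply span_span. intros f [Hf|Hf]; unfold Fk in Hf.
  - rewrite (key_nz j k Hj Hk Hli Hnorm _ (-1) (zRm j k Hj Hk Hli Hnorm)) in Hf. destruct Hf as [U [V [HU [HV ->]]]]. apply (minus_case j k Hj Hk Hli Hnorm); auto.
  - rewrite (key_nz j k Hj Hk Hli Hnorm _ 1 (zRp j k Hj Hk Hli Hnorm)) in Hf. destruct Hf as [U [V [HU [HV ->]]]]. apply (plus_case j k Hj Hk Hli Hnorm); auto.
Qed.


Theorem lemma5p21 :
  (forall k : Z3, k <> zzero ->
     forall e e' : Field, Fk k e -> Fk k e' -> Bop e e' = fzero)
  /\
  (forall j k : Z3, j <> zzero -> k <> zzero ->
     subset (span (Bset j k)) (span (set_union (Fk (zsub j k)) (Fk (zadd j k))))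
     /\ (lin_indep2 j k -> vnorm (zR j) <> vnorm (zR k) ->
         subset (span (set_union (Fk (zsub j k)) (Fk (zadd j k)))) (span (Bset j k))))
  /\
  subset (Fk (mkZ3 1 1 1)) (span BBset).
Proof.
  split; [exact part1|split].
  - intros j k Hj Hk. split.
    + apply part2a; auto.
    + intros Hli Hn. apply part2b; auto.
  - exact part3.
Qed.
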